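(* Let $C\in\mathbb{R}^{n\times n}$ be symmetric, $\rho>0$, and let $(\tilde\sigma^k,\sigma^k,y^k)$ be generated by the ADMM-BM algorithm described in the context, with Assumption A holding. Then for every iteration $k$, $$L_\rho(\tilde\sigma^k,\sigma^k,y^k)-L_\rho(\tilde\sigma^{k+1},\sigma^{k+1},y^{k+1})\ \ge\ \Big(\frac{\rho\min_{i\in[n]}\|\gamma_i^k\|}{2}-\frac{\|C\|^2}{\rho}\Big)\|\tilde\sigma^{k+1}-\tilde\sigma^k\|_F^2+\frac\rho2\|\sigma^{k+1}-\sigma^k\|_F^2.$$
   Context: $\langle A,B\rangle=\mathrm{Tr}(A^\top B)$, $\|\cdot\|_F$ Frobenius norm, $\|C\|$ spectral norm. For $\sigma\in\mathbb{R}^{n\times r}$, $\sigma_i$ is its $i$-th row; $\mathcal{M}=\{\sigma\in\mathbb{R}^{n\times r}:\|\sigma_i\|=1\ \forall i\}$. ADMM-BM with parameter $\rho$: choose $\tilde\sigma^0\in\mathcal{M}$, $\sigma^0=\tilde\sigma^0$, $y^0=C\tilde\sigma^0$. For $k=0,1,\dots$: $\gamma^k=\sigma^k-\frac1\rho(y^k+C\sigma^k)$ with rows $\gamma_i^k$; $\tilde\sigma^{k+1}_i=\gamma_i^k/\|\gamma_i^k\|$; $\sigma^{k+1}=\tilde\sigma^{k+1}+\frac1\rho(y^k-C\tilde\sigma^{k+1})$; $y^{k+1}=y^k+\rho(\tilde\sigma^{k+1}-\sigma^{k+1})$. Assumption A: $\gamma_i^k\neq0$ for all $i,k$. $L_\rho(\tilde\sigma,\sigma,y)=\langle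 C,\tilde\sigma\sigma^\top\rangle+\langle y,\tilde\sigma-\sigma\rangle+\frac\rho2\|\tilde\sigma-\sigma\|_F^2+\sum_i\mathcal{I}_{\{\|u\|=1\}}(\tilde\sigma_i)$, $\mathcal{I}_S$ the indicator function of $S$. *)

(* Defs.v *)
From HB Require Import structures.
From mathcomp Require Import all_boot all_order all_algebra.
From mathcomp Require Import boolp classical_sets reals constructive_ereal.
Set Implicit Arguments. Unset Strict Implicit. Unset Printing Implicit Defensive.
Import Order.TTheory GRing.Theory Num.Theory.
Local Open Scope ring_scope.
Local Open Scope classical_set_scope.

Section ADMMBM.
Variable R : realType.

Definition frob_inner (m p : nat) (A B : 'M[R]_(m, p)) : R := \tr (A^T *m B).
Definition frob_norm2 (m p : nat) (A : 'M[R]_(m, p)) : R := frob_inner A A.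

Definition rownorm (m p : nat) (A : 'M[R]_(m, p)) (i : 'I_m) : R :=
  Num.sqrt (\sum_(j < p) A i j ^+ 2).

Definition vnorm (m : nat) (x : 'cV[R]_m) : R :=
  Num.sqrt (\sum_(i < m) x i ord0 ^+ 2).

Definition spec_norm (m : nat) (C : 'M[R]_m) : R :=
  sup [set vnorm (C *m x) | x in [set x : 'cV[R]_m | vnorm x <= 1]].

Definition min_rownorm (m p : nat) (A : 'M[R]_(m, p)) : R :=
  inf [set rownorm A i | i in [set: 'I_m]].

Definition inM (m p : nat) (s : 'M[R]_(m, p)) : Prop :=
  forall i, rownorm s i = 1.

Definition rownormalize (m p : nat) (g : 'M[R]_(m, p)) : 'M[R]_(m, p) :=
  \matrix_(i, j) (g i j / rownorm g i).

Variables (n r : nat) (C : 'M[R]_n) (rho : R).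

Definition gammaOf (s y : 'M[R]_(n, r)) : 'M[R]_(n, r) :=
  s - rho^-1 *: (y + C *m s).

Definition admm_step (st : 'M[R]_(n, r) * 'M[R]_(n, r) * 'M[R]_(n, r)) :=
  let: (_, s, y) := st in
  let t' := rownormalize (gammaOf s y) in
  let s' := t' + rho^-1 *: (y - C *m t') in
  let y' := y + rho *: (t' - s') in
  (t', s', y').

Fixpoint admm_iter (t0 : 'M[R]_(n, r)) (k : nat) :=
  match k with
  | 0 => (t0, t0, C *m t0)
  | k'.+1 => admm_step (admm_iter t0 k')
  end.

Definition tsig t0 k := (admm_iter t0 k).1.1.
Definition sig t0 k := (admm_iter t0 k).1.2.
Definition yv t0 k := (admm_iter t0 k).2.
Definition gam t0 k := gammaOf (sig t0 k) (yv t0 k).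

Definition Lrho (t s y : 'M[R]_(n, r)) : \bar R :=
  ((frob_inner C (t *m s^T) + frob_inner y (t - s)
    + rho / 2 * frob_norm2 (t - s))%:E
   + (if `[< inM t >] then 0%E else +oo%E))%E.

End ADMMBM.

(* Main.v *)
Require Import Defs.
From HB Require Import structures.
From mathcomp Require Import all_boot all_order all_algebra.
From mathcomp Require Import boolp classical_sets reals constructive_ereal.
Import Order.TTheory GRing.Theory Num.Theory.
Local Open Scope ring_scope.
From mathcomp Require Import ring lra.
Set Implicit Arguments. Unset Strict Implicit. Unset Printing Implicit Defensive.

Section H.
Variable R : realType.
Implicit Types (m p : nat).

Lemma fi_sum m p (A B : 'M[R]_(m, p)) :
  frob_inner A B = \sum_i \sum_j A i j * B i j.
Proof.
rewrite /frob_inner /mxtrace exchange_big /=; apply: eq_bigr => j _.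
rewrite mxE; apply: eq_bigr => i _; by rewrite mxE.
Qed.

Lemma fiC m p (A B : 'M[R]_(m, p)) : frob_inner A B = frob_inner B A.
Proof. rewrite !fi_sum; apply: eq_bigr => i _; apply: eq_bigr => j _; exact: mulrC. Qed.

Lemma fiDl m p (A B D : 'M[R]_(m, p)) : frob_inner (A + B) D = frob_inner A D + frob_inner B D.
Proof. rewrite !fi_sum -big_split; apply: eq_bigr => i _; rewrite -big_split; apply: eq_bigr => j _; rewrite mxE; exact: mulrDl. Qed.

Lemma fiNl m p (A D : 'M[R]_(m, p)) : frob_inner (- A) D = - frob_inner A D.
Proof. rewrite !fi_sum -sumrN; apply: eq_bigr => i _; rewrite -sumrN; apply: eq_bigr => j _; rewrite mxE; exact: mulNr. Qed.

Lemma fiZl m p a (A D : 'M[R]_(m, p)) : frob_inner (a *: A) D = a * frob_inner A D.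
Proof. rewrite !fi_sum mulr_sumr; apply: eq_bigr => i _; rewrite mulr_sumr; apply: eq_bigr => j _; by rewrite mxE mulrA. Qed.

Lemma fiBl m p (A B D : 'M[R]_(m, p)) : frob_inner (A - B) D = frob_inner A D - frob_inner B D.
Proof. by rewrite fiDl fiNl. Qed.
Lemma fiDr m p (A B D : 'M[R]_(m, p)) : frob_inner D (A + B) = frob_inner D A + frob_inner D B.
Proof. by rewrite fiC fiDl !(fiC D). Qed.
Lemma fiBr m p (A B D : 'M[R]_(m, p)) : frob_inner D (A - B) = frob_inner D A - frob_inner D B.
Proof. by rewrite fiC fiBl !(fiC D). Qed.
Lemma fiZr m p a (A D : 'M[R]_(m, p)) : frob_inner D (a *: A) = a * frob_inner D A.
Proof. by rewrite fiC fiZl !(fiC D). Qed.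

Lemma fn2D m p (A B : 'M[R]_(m, p)) :
  frob_norm2 (A + B) = frob_norm2 A + 2 * frob_inner A B + frob_inner B B.
Proof. rewrite /frob_norm2 !(fiDl, fiDr) (fiC B A); ring. Qed.

Lemma fi_mul n p (C : 'M[R]_n) (A B : 'M[R]_(n, p)) : C^T = C ->
  frob_inner A (C *m B) = frob_inner (C *m A) B.
Proof.
move=> CT; rewrite /frob_inner trmx_mul CT mulmxA //.
Qed.

Lemma fi_ge0 m p (A : 'M[R]_(m, p)) : 0 <= frob_norm2 A.
Proof. rewrite /frob_norm2 fi_sum; apply: sumr_ge0 => i _; apply: sumr_ge0 => j _; by rewrite -expr2 sqr_ge0. Qed.

Lemma fn2_inM m p (A : 'M[R]_(m, p)) : inM A -> frob_norm2 A = m%:R.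
Proof.
move=> h; rewrite /frob_norm2 fi_sum -[m in m%:R]card_ord -sumr_const.
apply: eq_bigr => i _; have := h i; rewrite /rownorm => e.
have : (Num.sqrt (\sum_(j < p) A i j ^+ 2)) ^+ 2 = 1 by rewrite e expr1n.
rewrite sqr_sqrtr; last by apply: sumr_ge0 => j _; exact: sqr_ge0.
move=> <-; apply: eq_bigr => j _; by rewrite expr2.
Qed.
End H.

Section I.
Variables (R : realType) (n r : nat) (C : 'M[R]_n) (rho : R) (t0 : 'M[R]_(n, r)).

Lemma tsigS k : tsig C rho t0 k.+1 = rownormalize (gam C rho t0 k).
Proof. by rewrite /tsig /gam /sig /yv /=; case: (admm_iter C rho t0 k) => [[a b] c]. Qed.
Lemma sigS k : sig C rho t0 k.+1 = tsig C rho t0 k.+1 + rho^-1 *: (yv C rho t0 k - C *m tsig C rho t0 k.+1).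
Proof. by rewrite /tsig /gam /sig /yv /=; case: (admm_iter C rho t0 k) => [[a b] c]. Qed.
Lemma yvS k : yv C rho t0 k.+1 = yv C rho t0 k + rho *: (tsig C rho t0 k.+1 - sig C rho t0 k.+1).
Proof. by rewrite /tsig /gam /sig /yv /=; case: (admm_iter C rho t0 k) => [[a b] c]. Qed.

Lemma yv_eq k : rho != 0 -> yv C rho t0 k = C *m tsig C rho t0 k.
Proof.
move=> r0; case: k => [//|k]; rewrite yvS sigS.
set y := yv _ _ _ _; set t := tsig _ _ _ _.
rewrite opprD addrA subrr sub0r scalerN scalerA mulfV // scale1r opprB addrC subrK //.
Qed.

Lemma sig0 : sig C rho t0 0 = t0. Proof. by []. Qed.
Lemma tsig0 : tsig C rho t0 0 = t0. Proof. by []. Qed.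

Lemma inM_normalize m p (g : 'M[R]_(m, p)) : (forall i, rownorm g i != 0) -> inM (rownormalize g).
Proof.
move=> h i; rewrite /rownorm /rownormalize.
have -> : \sum_(j < p) (\matrix_(i0, j0) (g i0 j0 / rownorm g i0)) i j ^+ 2
   = (\sum_(j < p) g i j ^+ 2) / rownorm g i ^+ 2.
  rewrite mulr_suml; apply: eq_bigr => j _; by rewrite mxE expr_div_n.
have S0 : 0 <= \sum_(j < p) g i j ^+ 2 by apply: sumr_ge0 => j _; exact: sqr_ge0.
rewrite /rownorm sqr_sqrtr // mulfV ?sqrtr1 //.
by have := h i; rewrite /rownorm sqrtr_eq0 -ltNge => /gt_eqF ->.
Qed.

Lemma inM_tsig k : inM t0 -> (forall k i, rownorm (gam C rho t0 k) i != 0) -> inM (tsig C rho t0 k).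
Proof. case: k => [//|k] _ h; rewrite tsigS; exact: inM_normalize. Qed.
End I.

Section RW.
Variable R : realType.

Lemma rowsq1 m p (t : 'M[R]_(m, p)) i : inM t -> \sum_j t i j ^+ 2 = 1.
Proof.
move=> h; have := h i; rewrite /rownorm => e.
have : (Num.sqrt (\sum_(j < p) t i j ^+ 2)) ^+ 2 = 1 by rewrite e expr1n.
rewrite sqr_sqrtr //; apply: sumr_ge0 => j _; exact: sqr_ge0.
Qed.

Lemma row_ineq m p (g t : 'M[R]_(m, p)) mn : inM t -> (forall i, rownorm g i != 0) ->
  (forall i, mn <= rownorm g i) ->
  mn / 2 * frob_norm2 (rownormalize g - t) <= frob_inner g (rownormalize g - t).
Proof.
move=> ht hg hmn; rewrite /frob_norm2 !fi_sum mulr_sumr; apply: ler_sum => i _.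
set nu := rownorm g i.
set S := \sum_(j < p) g i j ^+ 2.
have S0 : 0 <= S by apply: sumr_ge0 => j _; exact: sqr_ge0.
have nu2 : nu ^+ 2 = S by rewrite /nu /rownorm sqr_sqrtr.
have nu0 : 0 < nu by rewrite lt0r hg /nu /rownorm sqrtr_ge0.
have T1 := rowsq1 i ht.
set a := \sum_(j < p) g i j * t i j.
have E1 : \sum_j (rownormalize g - t) i j * (rownormalize g - t) i j
   = nu^-1 ^+ 2 * S - 2 * nu^-1 * a + \sum_j t i j ^+ 2.
  rewrite /S mulr_sumr mulr_sumr -sumrB -big_split /=; apply: eq_bigr => j _.
  rewrite /rownormalize !mxE -/nu; ring.
have E2 : \sum_j g i j * (rownormalize g - t) i j = nu^-1 * S - a.
  rewrite /S mulr_sumr -sumrB; apply: eq_bigr => j _.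
  rewrite /rownormalize !mxE -/nu; ring.
have ge0 : 0 <= \sum_j (rownormalize g - t) i j * (rownormalize g - t) i j.
  apply: sumr_ge0 => j _; by rewrite -expr2 sqr_ge0.
rewrite E1 T1 in ge0.
rewrite E1 E2 T1.
have hm := hmn i; rewrite -/nu in hm.
move: ge0; rewrite -nu2 => ge0.
have hn : nu^-1 * nu = 1 by rewrite mulVf // gt_eqF.
have e1 : nu^-1 ^+ 2 * nu ^+ 2 = 1 by rewrite -exprMn hn expr1n.
have e2 : nu^-1 * nu ^+ 2 = nu by rewrite expr2 mulrA hn mul1r.
rewrite e1 e2 in ge0 *.
rewrite -mulrA in ge0.
set b := nu^-1 * a in ge0 *.
have nz : nu != 0 by rewrite gt_eqF.
have -> : nu - a = nu * (1 - b) by rewrite /b; field.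
have -> : mn / 2 * (1 - 2 * nu^-1 * a + 1) = mn * (1 - b) by rewrite /b; field.
apply: ler_wpM2r => //; lra.
Qed.
End RW.

Section SP.
Local Open Scope classical_set_scope.
Variable R : realType.

Definition qn m (x : 'cV[R]_m) := \sum_i x i ord0 ^+ 2.

Lemma qn_ge0 m (x : 'cV[R]_m) : 0 <= qn x.
Proof. apply: sumr_ge0 => i _; exact: sqr_ge0. Qed.

Lemma vnormE m (x : 'cV[R]_m) : vnorm x = Num.sqrt (qn x).
Proof. by []. Qed.

Lemma sq_abs (a : R) : a ^+ 2 = `|a| ^+ 2.
Proof. by rewrite -normrX ger0_norm ?sqr_ge0. Qed.

Lemma term_le_qn m (x : 'cV[R]_m) k : x k ord0 ^+ 2 <= qn x.
Proof.
rewrite /qn (bigD1 k) //= lerDl; apply: sumr_ge0 => i _; exact: sqr_ge0.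
Qed.

Lemma spec_ub m (C : 'M[R]_m) :
  has_ubound [set vnorm (C *m x) | x in [set x : 'cV[R]_m | vnorm x <= 1]].
Proof.
exists (Num.sqrt (\sum_i (\sum_k `|C i k|) ^+ 2)) => _ [x /= hx <-].
rewrite vnormE; apply: ler_wsqrtr; apply: ler_sum => i _.
have q1 : qn x <= 1.
  by move: hx; rewrite vnormE -{1}sqrtr1 ler_sqrt.
have hk : forall k, `|x k ord0| <= 1.
  move=> k; have := term_le_qn x k; rewrite sq_abs => h.
  have := normr_ge0 (x k ord0); nra.
rewrite mxE.
have h1 : `|\sum_j C i j * x j ord0| <= \sum_k `|C i k|.
  apply: le_trans (ler_norm_sum _ _ _) _; apply: ler_sum => k _.
  rewrite normrM; apply: ler_piMr => //.
have h0 := normr_ge0 (\sum_j C i j * x j ord0).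
rewrite sq_abs; nra.
Qed.

Lemma spec_le m (C : 'M[R]_m) x : vnorm x <= 1 -> vnorm (C *m x) <= spec_norm C.
Proof.
move=> hx; apply: (ub_le_sup (spec_ub C)); by exists x.
Qed.

Lemma qn_spec m (C : 'M[R]_m) x : qn (C *m x) <= spec_norm C ^+ 2 * qn x.
Proof.
have [q0|qp] := eqVneq (qn x) 0.
  have x0 : x = 0.
    apply/matrixP => i j; rewrite (ord1 j) mxE.
    move/eqP: q0; rewrite psumr_eq0 => [/allP /(_ i) |]; last by move=> k _; exact: sqr_ge0.
    by rewrite mem_index_enum /= sqrf_eq0 => /(_ isT) /eqP.
  by rewrite q0 x0 mulmx0 mulr0 /qn big1 // => i _; rewrite mxE expr0n.
have qpos : 0 < qn x by rewrite lt0r qp qn_ge0.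
set v := Num.sqrt (qn x).
have vpos : 0 < v by rewrite sqrtr_gt0.
have v2 : v ^+ 2 = qn x by rewrite sqr_sqrtr // qn_ge0.
set z := v^-1 *: x.
have qz : forall y : 'cV[R]_m, qn (v^-1 *: y) = v^-1 ^+ 2 * qn y.
  move=> y; rewrite /qn mulr_sumr; apply: eq_bigr => i _; by rewrite mxE exprMn.
have hz : vnorm z <= 1.
  rewrite vnormE qz -v2 -exprMn mulVf ?gt_eqF // expr1n sqrtr1 //.
have := spec_le C hz; rewrite /z -scalemxAr vnormE qz sqrtrM ?sqr_ge0 //.
rewrite sqrtr_sqr ger0_norm; last by rewrite invr_ge0 ltW.
set w := Num.sqrt (qn (C *m x)).
have w2 : w ^+ 2 = qn (C *m x) by rewrite sqr_sqrtr // qn_ge0.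
have w0 : 0 <= w by exact: sqrtr_ge0.
move=> h; rewrite -w2 -v2.
have h2 : w <= spec_norm C * v.
  by have := ler_wpM2l (ltW vpos) h; rewrite mulrA divff ?gt_eqF // mul1r mulrC.
rewrite -exprMn.
have h3 : 0 <= spec_norm C * v by apply: le_trans h2.
nra.
Qed.

Lemma fn2_spec n p (C : 'M[R]_n) (D : 'M[R]_(n, p)) :
  frob_norm2 (C *m D) <= spec_norm C ^+ 2 * frob_norm2 D.
Proof.
have E : forall A : 'M[R]_(n, p), frob_norm2 A = \sum_j qn (col j A).
  move=> A; rewrite /frob_norm2 fi_sum exchange_big /=; apply: eq_bigr => j _.
  rewrite /qn; apply: eq_bigr => i _; by rewrite !mxE expr2.
rewrite !E mulr_sumr; apply: ler_sum => j _.
have -> : col j (C *m D) = C *m col j D.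
  by apply/matrixP => i k; rewrite !mxE; apply: eq_bigr => l _; rewrite !mxE.
exact: qn_spec.
Qed.
End SP.

Section K.
Variable R : realType.
Lemma fiNr m p (A D : 'M[R]_(m, p)) : frob_inner D (- A) = - frob_inner D A.
Proof. by rewrite fiC fiNl fiC. Qed.
Lemma key n r (C : 'M[R]_n) rho (t D E : 'M[R]_(n, r)) : C^T = C -> rho != 0 ->
  frob_inner t D = - frob_inner D D / 2 ->
  (frob_inner t (C *m t) + rho / 2 * frob_norm2 (t - (t - E)))
  - (frob_inner (t + D) (C *m (t + D)) + rho / 2 * frob_norm2 ((t + D) - (t + D - rho^-1 *: (C *m D))))
  - rho / 2 * frob_norm2 ((t + D - rho^-1 *: (C *m D)) - (t - E))
  = rho * frob_inner ((t - E) - rho^-1 *: (C *m t + C *m (t - E))) D - rho^-1 * frob_norm2 (C *m D).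
Proof.
move=> CT r0 hTD.
have e1 : t - (t - E) = E by rewrite opprB addrC subrK.
have e2 : (t + D) - (t + D - rho^-1 *: (C *m D)) = rho^-1 *: (C *m D) by rewrite opprB addrC subrK.
have e3 : (t + D - rho^-1 *: (C *m D)) - (t - E) = D + E - rho^-1 *: (C *m D).
  by apply/matrixP => i j; rewrite !mxE; ring.
rewrite e1 e2 e3 /frob_norm2.
rewrite !mulmxDr ?mulmxBr -?scalemxAr.
rewrite ?mulmxN !(fiDl, fiDr, fiBl, fiBr, fiZl, fiZr, fiNl, fiNr).
rewrite (fiC E D) (fiC (C *m D) D) (fiC (C *m D) E) (fiC (C *m E) D).
rewrite (fi_mul D t CT) (fiC (C *m D) t) (fi_mul D E CT) (fiC (C *m D) E).
rewrite (fiC (C *m t) D) (fi_mul D t CT) (fiC (C *m D) t).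
rewrite hTD.
field. all: by [].
Qed.
End K.

Section LS.
Variable R : realType.
Lemma Lsimp n r (C : 'M[R]_n) (t s : 'M[R]_(n, r)) (rho : R) : C^T = C ->
  frob_inner C (t *m s^T) + frob_inner (C *m t) (t - s) + rho / 2 * frob_norm2 (t - s)
  = frob_inner t (C *m t) + rho / 2 * frob_norm2 (t - s).
Proof.
move=> CT; congr (_ + _).
have -> : frob_inner C (t *m s^T) = frob_inner s (C *m t).
  by rewrite /frob_inner CT mulmxA mxtrace_mulC.
by rewrite fiBr (fiC s) (fiC (C *m t) t); ring.
Qed.
End LS.

Theorem lemma1 (R : realType) (n r : nat) (C : 'M[R]_n) (rho : R)
  (t0 : 'M[R]_(n, r)) :
  C^T = C -> 0 < rho -> inM t0 ->
  (forall (k : nat) (i : 'I_n), rownorm (gam C rho t0 k) i != 0) ->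
  forall k : nat,
  (Lrho C rho (tsig C rho t0 k) (sig C rho t0 k) (yv C rho t0 k)
   - Lrho C rho (tsig C rho t0 k.+1) (sig C rho t0 k.+1) (yv C rho t0 k.+1)
   >= ((rho * min_rownorm (gam C rho t0 k) / 2 - spec_norm C ^+ 2 / rho)
        * frob_norm2 (tsig C rho t0 k.+1 - tsig C rho t0 k)
       + rho / 2 * frob_norm2 (sig C rho t0 k.+1 - sig C rho t0 k))%:E)%E.
Proof.
move=> CT rp ht0 hg k.
have r0 : rho != 0 by rewrite gt_eqF.
have hy := yv_eq C t0 k r0; have hy' := yv_eq C t0 k.+1 r0.
have hM := inM_tsig (C:=C) (rho:=rho) k ht0 hg; have hM' := inM_tsig (C:=C) (rho:=rho) k.+1 ht0 hg.
have hs' := sigS C rho t0 k; have ht' := tsigS C rho t0 k.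
have hgam : gam C rho t0 k = sig C rho t0 k - rho^-1 *: (yv C rho t0 k + C *m sig C rho t0 k) by [].
rewrite /Lrho (asboolT hM) (asboolT hM') !adde0 -EFinB lee_fin.
rewrite hy hy' in hs' hgam *.
move: hs' ht' hgam hM hM'.
set t := tsig C rho t0 k; set t' := tsig C rho t0 k.+1.
set s := sig C rho t0 k; set s' := sig C rho t0 k.+1.
set g := gam C rho t0 k.
move=> hs' ht' hgam hM hM'.
rewrite !Lsimp //.
set D := t' - t; set E := t - s.
have eT : t + D = t' by rewrite /D addrC subrK.
have eS : t - E = s by rewrite /E opprB addrC subrK.
have eS' : t' - rho^-1 *: (C *m D) = s'.
  by rewrite hs' /D mulmxBr -scalerN opprB.
have hTD : frob_inner t D = - frob_inner D D / 2.
  have h1 := fn2_inM hM; have h2 := fn2_inM hM'.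
  have h3 := fn2D t D.
  rewrite eT h2 h1 in h3; rewrite -[frob_inner t D]/(frob_inner t D).
  lra.
have K := key (C:=C) (rho:=rho) (t:=t) (D:=D) E CT r0 hTD.
rewrite eT eS eS' -hgam in K.
have hmn : forall i, min_rownorm g <= rownorm g i.
  move=> i; apply: ge_inf; last by exists i.
  by exists 0 => _ [j _ <-]; exact: sqrtr_ge0.
have RI := row_ineq hM (hg k) hmn.
rewrite -ht' -/D in RI.
have SP := fn2_spec C D.
set G := frob_inner g D in K RI.
set X := frob_norm2 (C *m D) in K SP.
set N := frob_norm2 D in RI SP *.
set Ss := frob_norm2 (s' - s) in K *.
set L1 := frob_inner t (C *m t) + rho / 2 * frob_norm2 E in K *.
set L2 := frob_inner t' (C *m t') + rho / 2 * frob_norm2 (t' - s') in K *.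
have u0 : 0 < rho^-1 by rewrite invr_gt0.
have a1 : 0 <= rho * (G - min_rownorm g / 2 * N) by apply: mulr_ge0; [exact: ltW | lra].
have a2 : 0 <= rho^-1 * (spec_norm C ^+ 2 * N - X) by apply: mulr_ge0; [exact: ltW | lra].
have -> : L1 - L2 = rho / 2 * Ss + (rho * G - rho^-1 * X) by lra.
rewrite -subr_ge0.
have -> : rho / 2 * Ss + (rho * G - rho^-1 * X) -
  ((rho * min_rownorm g / 2 - spec_norm C ^+ 2 / rho) * N + rho / 2 * Ss)
  = rho * (G - min_rownorm g / 2 * N) + rho^-1 * (spec_norm C ^+ 2 * N - X) by ring.
exact: addr_ge0.
Qed.
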